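(* Assume $a_{10}a_{01}\neq0$ and let $\mu=a_{10}/a_{01}$. The level set $\{(I,\theta):\mathcal{L}^*_M(I,\theta)=A_{00}+A_{01}\}$ of the reduced Poincaré function associated to the maximum crest is, on the cylinder $\mathbb{T}\times B$, the union of two ''vertical'' curves, i.e. of two graphs $\{(\theta_{l}(I),I):I\in B\}$ and $\{(\theta_{r}(I),I):I\in B\}$ of smooth functions with $0<\theta_l(I)<\pi<\theta_r(I)<2\pi$, along which $\partial\mathcal{L}^*_M/\partial\theta\neq0$. Here: - if $|\mu|<0.625$ (precisely, $|\mu|<1/\beta_{\max}$), $B=\mathbb{R}$; - if $|\mu|\ge 0.625$, $B=(-\infty,-I_{++})\cup(-I_+,I_+)\cup(I_{++},+\infty)$, where $I_{++}=\max\{I>0:\ I^3\sinh(\pi/2)/\sinh(I\pi/2)=1/|\mu|\}$, and $I_+=\min\{I>0:\ I^3\sinh(\pi/2)/\sinh(I\pi/2)=1/|\mu|\}$ if $|\mu|\le1$, while $I_+=\min\{I>0:\ I^2\sinh(\pi/2)/\sinh(I\pi/2)=1/|\mu|\}$ if $|\mu|\ge1$.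
   Context: $A_{00}=4a_{00}$, $A_{10}(I)=2\pi I a_{10}/\sinh(\pi I/2)$, $A_{01}=2\pi a_{01}/\sinh(\pi/2)$, $\mathcal{L}(I,\varphi,s)=A_{00}+A_{10}(I)\cos\varphi+A_{01}\cos s$. $\alpha(I)=\sinh(\pi/2)I^2/\sinh(\pi I/2)$, $\beta(I)=I\alpha(I)$, $\beta_{\max}=\max_{I\ge 0}\beta(I)\approx1.6$. Maximum crest $C_M(I)$: the component of $\{\mu\alpha(I)\sin\varphi+\sin s=0\}\subset\mathbb{T}^2$ containing $(0,0)$; when $|\mu\alpha(I)|<1$ it is the graph $s=\xi_M(I,\varphi)=-\arcsin(\mu\alpha(I)\sin\varphi)$. For $I$ such that $C_M(I)$ is horizontal and no NHIM line $\{\varphi-Is=\theta\}$ is tangent to it, $\tau^*_M(I,\theta)$ denotes the value with $(\theta-I\tau^*_M,-\tau^*_M)\in C_M(I)$, and the reduced Poincaré function is $\mathcal{L}^*_M(I,\theta)=A_{00}+A_{10}(I)\cos(\theta-I\tau^*_M(I,\theta))+A_{01}\cos(\tau^*_M(I,\theta))$. The two curves of the claim are called highways $H_l$ and $H_r$. *)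

(* Defs.v *)
From Stdlib Require Import Reals Lra ClassicalEpsilon.
Open Scope R_scope.

Definition alpha (I : R) : R :=
  if Req_EM_T I 0 then 0 else sinh (PI / 2) * I ^ 2 / sinh (PI * I / 2).

Definition beta (I : R) : R := I * alpha I.

Definition A00 (a00 : R) : R := 4 * a00.
Definition A10 (a10 I : R) : R :=
  if Req_EM_T I 0 then 4 * a10 else 2 * PI * I * a10 / sinh (PI * I / 2).
Definition A01 (a01 : R) : R := 2 * PI * a01 / sinh (PI / 2).

Definition Lpoinc (a00 a10 a01 I phi s : R) : R :=
  A00 a00 + A10 a10 I * cos phi + A01 a01 * cos s.

(* maximum crest as a graph: s = xi_M(I, phi) = - arcsin(mu alpha(I) sin phi) *)
Definition xiM (mu I phi : R) : R := - asin (mu * alpha I * sin phi).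

(* tau*_M(I,theta): the value tau with (theta - I tau, - tau) on the crest
   C_M(I), i.e. - tau = xi_M(I, theta - I tau).  Chosen by (classical)
   description; it is unique whenever |mu beta(I)| < 1. *)
Definition tau_star (mu I theta : R) : R :=
  epsilon (inhabits 0) (fun t => - t = xiM mu I (theta - I * t)).

Definition Lstar (a00 a10 a01 I theta : R) : R :=
  let t := tau_star (a10 / a01) I theta in
  A00 a00 + A10 a10 I * cos (theta - I * t) + A01 a01 * cos t.

Definition is_max_of (P : R -> Prop) (x : R) : Prop :=
  P x /\ forall y, P y -> y <= x.
Definition is_min_of (P : R -> Prop) (x : R) : Prop :=
  P x /\ forall y, P y -> x <= y.

Definition smooth_on (B : R -> Prop) (f : R -> R) : Prop :=
  exists fs : nat -> R -> R,
    fs O = f /\ forall n x, B x -> derivable_pt_lim (fs n) x (fs (S n) x).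

Definition Bdom (mu bmax Ip Ipp I : R) : Prop :=
  if Rlt_dec (Rabs mu) (1 / bmax) then True
  else (I < - Ipp \/ (- Ip < I /\ I < Ip) \/ Ipp < I).

(* Main.v *)
From Coquelicot Require Import Coquelicot.
Require Import Defs.
From Stdlib Require Import Reals Lra Lia FunctionalExtensionality ClassicalEpsilon Ranalysis5 Factorial.
Open Scope R_scope.

Inductive tm (A : Type) : Type :=
| Cst : R -> tm A
| At : A -> tm A
| Add : tm A -> tm A -> tm A
| Mul : tm A -> tm A -> tm A.
Arguments Cst {A}. Arguments At {A}. Arguments Add {A}. Arguments Mul {A}.

Section TM.
Variable A : Type.
Variable da : A -> R -> R.
Variable datom : A -> tm A.
Fixpoint den (t : tm A) : R -> R :=
  match t with
  | Cst r => fun _ => r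
  | At a => da a
  | Add t1 t2 => fun x => den t1 x + den t2 x
  | Mul t1 t2 => fun x => den t1 x * den t2 x
  end.
Fixpoint dt (t : tm A) : tm A :=
  match t with
  | Cst _ => Cst 0
  | At a => datom a
  | Add t1 t2 => Add (dt t1) (dt t2)
  | Mul t1 t2 => Add (Mul (dt t1) t2) (Mul t1 (dt t2))
  end.
Variable U : R -> Prop.
Hypothesis Hd : forall a x, U x -> derivable_pt_lim (da a) x (den (datom a) x).
Lemma den_deriv : forall t x, U x -> derivable_pt_lim (den t) x (den (dt t) x).
Proof.
  induction t; intros x Ux; simpl.
  - apply derivable_pt_lim_const.
  - apply Hd; auto.
  - apply (derivable_pt_lim_plus (den t1) (den t2)); auto.
  - apply (derivable_pt_lim_mult (den t1) (den t2)); auto.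
Qed.
Lemma tm_smooth : forall t, smooth_on U (den t).
Proof.
  intros t. exists (fun n => den (Nat.iter n dt t)). split; [reflexivity|].
  intros n x Ux. simpl. apply den_deriv; auto.
Qed.
End TM.

Lemma smooth_ext U f g : (forall x, f x = g x) -> smooth_on U f -> smooth_on U g.
Proof. intros H S. replace g with f; auto. apply functional_extensionality; auto. Qed.

Lemma smooth_sub (U V : R -> Prop) f : (forall x, U x -> V x) -> smooth_on V f -> smooth_on U f.
Proof. intros H [fs [H0 H1]]. exists fs; split; auto. Qed.

Lemma smooth_const U c : smooth_on U (fun _ => c).
Proof. apply (tm_smooth Empty_set (fun e => match e with end) (fun e => match e with end) U)
  with (t := Cst c). intros []. Qed.

Lemma smooth_id U : smooth_on U (fun x => x).
Proof.
  apply (tm_smooth unit (fun _ x => x) (fun _ => Cst 1) U) with (t := At tt).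
  intros _ x _. apply derivable_pt_lim_id.
Qed.

Lemma smooth_deriv U f f' : (forall x, U x -> derivable_pt_lim f x (f' x)) ->
  smooth_on U f' -> smooth_on U f.
Proof.
  intros H [fs [H0 H1]].
  exists (fun n => match n with O => f | S m => fs m end). split; auto.
  intros [|n] x Ux; simpl. rewrite H0; auto. auto.
Qed.

Section Two.
Variables (U : R -> Prop) (f g : R -> R).
Hypothesis (Sf : smooth_on U f) (Sg : smooth_on U g).
Lemma smooth_two : forall t : tm (bool * nat), exists fs gs,
   fs O = f /\ gs O = g /\
   smooth_on U (den (bool*nat) (fun p => if fst p then fs (snd p) else gs (snd p)) t).
Proof.
  intros t. destruct Sf as [fs [F0 F1]], Sg as [gs [G0 G1]].
  exists fs, gs. split; auto. split; auto.
  apply (tm_smooth _ _ (fun p => At (fst p, S (snd p))) U).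
  intros [[|] n] x Ux; simpl; auto.
Qed.
End Two.

Lemma smooth_plus U f g : smooth_on U f -> smooth_on U g -> smooth_on U (fun x => f x + g x).
Proof.
  intros Sf Sg. destruct (smooth_two U f g Sf Sg (Add (At (true,O)) (At (false,O)))) as [fs [gs [F0 [G0 S]]]].
  simpl in S. rewrite F0, G0 in S. exact S.
Qed.

Lemma smooth_mult U f g : smooth_on U f -> smooth_on U g -> smooth_on U (fun x => f x * g x).
Proof.
  intros Sf Sg. destruct (smooth_two U f g Sf Sg (Mul (At (true,O)) (At (false,O)))) as [fs [gs [F0 [G0 S]]]].
  simpl in S. rewrite F0, G0 in S. exact S.
Qed.

Lemma smooth_comp (U V : R -> Prop) f g : smooth_on V f -> smooth_on U g ->
  (forall x, U x -> V (g x)) -> smooth_on U (fun x => f (g x)).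
Proof.
  intros [fs [F0 F1]] [gs [G0 G1]] HUV.
  pose (da := fun (p : nat + nat) => match p with inl i => fun x => fs i (g x) | inr j => gs j end).
  pose (datom := fun (p : nat + nat) => match p with
      inl i => Mul (At (inl (S i))) (At (inr 1%nat)) | inr j => At (inr (S j)) end).
  assert (Hs : forall t, smooth_on U (den _ da t)).
  { apply (tm_smooth _ da datom).
  intros [i|j] x Ux; simpl.
  - assert (Hg : derivable_pt_lim g x (gs 1%nat x)) by (rewrite <- G0; auto).
    apply (derivable_pt_lim_comp g (fs i)); auto.
  - auto. }
  specialize (Hs (At (inl O))). simpl in Hs. rewrite F0 in Hs. exact Hs.
Qed.


Lemma dlim_ext f g x l : (forall y, f y = g y) -> derivable_pt_lim f x l -> derivable_pt_lim g x l.
Proof. intros H D. replace g with f; auto. apply functional_extensionality; auto. Qed.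

Lemma dlim_eq f x l l' : l = l' -> derivable_pt_lim f x l -> derivable_pt_lim f x l'.
Proof. intros ->; auto. Qed.

Lemma dlim_inv x : x <> 0 -> derivable_pt_lim Rinv x (- / x * / x).
Proof.
  intros Hx. apply dlim_ext with (f := (fct_cte 1 / id)%F).
  { intros y. unfold div_fct, fct_cte, id. unfold Rdiv; ring. }
  eapply dlim_eq; [|apply derivable_pt_lim_div; [apply derivable_pt_lim_const|apply derivable_pt_lim_id|exact Hx]].
  unfold fct_cte, id, Rsqr. field. auto.
Qed.

Lemma smooth_inv_base : smooth_on (fun x => x <> 0) Rinv.
Proof.
  apply (tm_smooth unit (fun _ => Rinv) (fun _ => Mul (Cst (-1)) (Mul (At tt) (At tt))) _)
    with (t := At tt).
  intros _ x Hx. simpl. eapply dlim_eq; [|apply dlim_inv; auto]. ring.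
Qed.

Lemma smooth_inv U f : smooth_on U f -> (forall x, U x -> f x <> 0) -> smooth_on U (fun x => / f x).
Proof. intros S H. apply (smooth_comp U (fun x => x <> 0) Rinv f); auto. apply smooth_inv_base. Qed.



Lemma dlim_isqrt x : 0 < x -> derivable_pt_lim (fun y => / sqrt y) x (- / 2 * (/ sqrt x * (/ sqrt x * / sqrt x))).
Proof.
  intros Hx. assert (Hs : 0 < sqrt x) by (apply sqrt_lt_R0; auto).
  assert (D := derivable_pt_lim_comp sqrt Rinv x _ _ (derivable_pt_lim_sqrt x Hx) (dlim_inv (sqrt x) ltac:(lra))).
  unfold comp in D. eapply dlim_eq; [|exact D].
  assert (E: sqrt x * sqrt x = x) by (apply sqrt_sqrt; lra).
  field_simplify; try lra.
Qed.

Lemma smooth_sqrt_base : smooth_on (fun x => 0 < x) sqrt.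
Proof.
  apply (tm_smooth bool (fun b => if b then sqrt else fun y => / sqrt y)
     (fun b => if b then Mul (Cst (/2)) (At false)
               else Mul (Cst (- / 2)) (Mul (At false) (Mul (At false) (At false)))) _)
    with (t := At true).
  intros [|] x Hx; simpl.
  - eapply dlim_eq; [|apply derivable_pt_lim_sqrt; auto].
    assert (0 < sqrt x) by (apply sqrt_lt_R0; auto). field. lra.
  - apply dlim_isqrt; auto.
Qed.

Lemma smooth_sqrt U f : smooth_on U f -> (forall x, U x -> 0 < f x) -> smooth_on U (fun x => sqrt (f x)).
Proof. intros S H. apply (smooth_comp U (fun x => 0 < x) sqrt f); auto. apply smooth_sqrt_base. Qed.

Lemma dlim_asin x : -1 < x < 1 -> derivable_pt_lim asin x (/ sqrt (1 - x * x)).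
Proof.
  intros Hx. apply (derive_pt_eq_1 _ _ _ (derivable_pt_asin x Hx)).
  rewrite derive_pt_asin. unfold Rsqr. field. apply Rgt_not_eq, sqrt_lt_R0. nra.
Qed.

Lemma smooth_asin_base : smooth_on (fun x => -1 < x < 1) asin.
Proof.
  apply smooth_deriv with (f' := fun x => / sqrt (1 - x * x)).
  - intros; apply dlim_asin; auto.
  - apply smooth_inv.
    + apply smooth_sqrt. apply smooth_plus. apply smooth_const.
      apply smooth_ext with (f := fun x => -1 * (x*x)); [intros; ring|].
      apply smooth_mult. apply smooth_const.
      apply smooth_mult; apply smooth_id.
      intros x Hx. nra.
    + intros x Hx. apply Rgt_not_eq, sqrt_lt_R0. nra.
Qed.

Lemma smooth_asin U f : smooth_on U f -> (forall x, U x -> -1 < f x < 1) -> smooth_on U (fun x => asin (f x)).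
Proof. intros S H. apply (smooth_comp U (fun x => -1 < x < 1) asin f); auto. apply smooth_asin_base. Qed.

Definition cu (n : nat) : R := (1 + (-1)^n) / 2 / INR (fact (S n)).

Lemma term_le_exp x n : 0 <= x -> x ^ n / INR (fact n) <= exp x.
Proof.
  intros Hx. unfold exp. destruct (exist_exp x) as [l Hl]. simpl.
  apply Rle_trans with (sum_f_R0 (fun i => / INR (fact i) * x ^ i) n).
  - destruct n. simpl. lra.
    rewrite tech5. assert (0 <= sum_f_R0 (fun i => / INR (fact i) * x ^ i) n).
    { apply cond_pos_sum. intros i. apply Rmult_le_pos. left; apply Rinv_0_lt_compat, INR_fact_lt_0.
      apply pow_le; auto. }
    unfold Rdiv. lra.
  - apply sum_incr. exact Hl. intros i. apply Rmult_le_pos. left; apply Rinv_0_lt_compat, INR_fact_lt_0.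
      apply pow_le; auto.
Qed.

Lemma m1pow n : (-1)^n = 1 \/ (-1)^n = -1.
Proof. induction n. left; simpl; lra. simpl. destruct IHn as [E|E]; rewrite E; [right|left]; lra. Qed.

Lemma cu_bound n : Rabs (cu n) <= / INR (fact n).
Proof.
  unfold cu. assert (H1 : 0 < INR (fact n)) by apply INR_fact_lt_0.
  assert (H2 : INR (fact n) <= INR (fact (S n))) by (apply le_INR, fact_le; lia).
  destruct (m1pow n) as [E|E]; rewrite E.
  - rewrite Rabs_right. 2:{ apply Rle_ge. unfold Rdiv. apply Rmult_le_pos. lra. left; apply Rinv_0_lt_compat; lra. }
    replace ((1+1)/2 / INR (fact (S n))) with (/ INR (fact (S n))) by (field; lra).
    apply Rinv_le_contravar; lra.
  - replace ((1 + -1)/2 / INR (fact (S n))) with 0 by (field; lra). rewrite Rabs_R0.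
    left; apply Rinv_0_lt_compat; lra.
Qed.

Lemma radius_cu x : Rbar_lt (Rabs x) (CV_radius cu).
Proof.
  destruct (CV_radius_bounded cu) as [Hub _].
  assert (H : Rbar_le (Rabs x + 1) (CV_radius cu)).
  { apply Hub. exists (exp (Rabs x + 1)). intros n.
    assert (0 <= Rabs x) by apply Rabs_pos.
    rewrite Rabs_mult, <- RPow_abs.
    rewrite (Rabs_right (Rabs x + 1)) by lra.
    apply Rle_trans with (/ INR (fact n) * (Rabs x + 1)^n).
    - apply Rmult_le_compat_r. apply pow_le; lra. apply cu_bound.
    - rewrite Rmult_comm. apply term_le_exp. lra. }
  destruct (CV_radius cu) as [r| |]; simpl in *; lra.
Qed.

Lemma radius_iter k x : Rbar_lt (Rabs x) (CV_radius (Nat.iter k PS_derive cu)).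
Proof.
  induction k; simpl. apply radius_cu. rewrite CV_radius_derive. auto.
Qed.

Definition u (x : R) : R := PSeries cu x.

Lemma smooth_u U : smooth_on U u.
Proof.
  exists (fun k => PSeries (Nat.iter k PS_derive cu)). split; [reflexivity|].
  intros n x _. apply is_derive_Reals. simpl. apply is_derive_PSeries. apply radius_iter.
Qed.

Lemma u_0 : u 0 = 1.
Proof. unfold u. rewrite PSeries_0. unfold cu. simpl. field. Qed.

Lemma u_sinh x : x * u x = sinh x.
Proof.
  unfold u. rewrite <- PSeries_incr_1. apply is_pseries_unique.
  assert (E1 := is_exp_Reals x).
  assert (E2 : is_pseries (fun n => (-1)^n / INR (fact n)) x (exp (-x))).
  { apply is_series_ext with (a := fun k => scal (pow_n (-x) k) (/ INR (fact k))).
    2: apply is_exp_Reals.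
    intros n. unfold scal; simpl. unfold mult; simpl. rewrite !pow_n_pow. change (pow_n x n) with (x ^ n).
    replace (-x) with ((-1) * x) by ring. rewrite Rpow_mult_distr. unfold Rdiv. ring. }
  assert (E3 := is_pseries_scal (/2) _ _ _ (Rmult_comm _ _) (is_pseries_minus _ _ _ _ _ E1 E2)).
  replace (sinh x) with (scal (/2) (plus (exp x) (opp (exp (-x))))).
  2:{ unfold sinh, scal, plus, opp; simpl. unfold mult; simpl. unfold plus, opp; simpl. field. }
  apply is_pseries_ext with (2 := E3).
  intros [|n]; unfold PS_scal, PS_minus, PS_incr_1, PS_plus, PS_opp, cu; simpl;
    unfold scal, plus, opp, zero; simpl; unfold mult, plus, opp, zero; simpl.
  - field.
  - assert (0 < INR (fact n + n * fact n)).
    { change (fact n + n * fact n)%nat with (fact (S n)). apply INR_fact_lt_0. }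
    field. lra.
Qed.

Lemma u_pos y : 0 < u y.
Proof.
  destruct (Req_dec y 0) as [->|Hy]. rewrite u_0; lra.
  assert (E := u_sinh y).
  destruct (Rlt_or_le 0 y) as [H|H].
  - assert (sinh 0 < sinh y) by (apply sinh_lt; auto). rewrite sinh_0 in *.
    nra.
  - assert (sinh y < sinh 0) by (apply sinh_lt; lra). rewrite sinh_0 in *. nra.
Qed.

Definition K0 : R := 2 * sinh (PI / 2) / PI.
Definition gam (I : R) : R := K0 / u (PI * I / 2).

Lemma sinhPI2_pos : 0 < sinh (PI/2).
Proof. rewrite <- sinh_0. apply sinh_lt. apply PI2_RGT_0. Qed.

Lemma K0_pos : 0 < K0.
Proof. unfold K0. assert (H := sinhPI2_pos). assert (H2 := PI_RGT_0). unfold Rdiv. apply Rmult_lt_0_compat. lra. apply Rinv_0_lt_compat; lra. Qed.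

Lemma gam_pos I : 0 < gam I.
Proof. unfold gam, Rdiv. apply Rmult_lt_0_compat. apply K0_pos. apply Rinv_0_lt_compat, u_pos. Qed.

Lemma gam_nz I : I <> 0 -> gam I = sinh (PI/2) * I / sinh (PI * I / 2).
Proof.
  intros HI. unfold gam, K0. assert (E := u_sinh (PI * I / 2)).
  assert (Hu := u_pos (PI * I / 2)). assert (HP := PI_RGT_0).
  rewrite <- E. field. repeat split; auto; lra.
Qed.

Lemma alpha_gam I : alpha I = I * gam I.
Proof.
  unfold alpha. destruct (Req_EM_T I 0) as [->|H]. ring.
  rewrite gam_nz; auto. assert (sinh (PI * I / 2) <> 0).
  { rewrite <- (u_sinh (PI*I/2)). assert (Hu := u_pos (PI * I / 2)). assert (HP := PI_RGT_0).
    apply Rmult_integral_contrapositive. split. intro. apply H. nra. lra. }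
  field. auto.
Qed.

Lemma beta_gam I : beta I = I * I * gam I.
Proof. unfold beta. rewrite alpha_gam. ring. Qed.

Lemma A10_gam a10 a01 I : a01 <> 0 -> A10 a10 I = (a10 / a01) * gam I * A01 a01.
Proof.
  intros H. unfold A10, A01. assert (Hs := sinhPI2_pos). assert (HP := PI_RGT_0).
  destruct (Req_EM_T I 0) as [->|HI].
  - unfold gam. replace (PI * 0 / 2) with 0 by field. rewrite u_0. unfold K0. field. lra.
  - rewrite gam_nz; auto.
    assert (sinh (PI * I / 2) <> 0).
    { rewrite <- (u_sinh (PI*I/2)). assert (Hu := u_pos (PI * I / 2)).
      apply Rmult_integral_contrapositive. split. intro. apply HI. nra. lra. }
    field. lra.
Qed.

Lemma smooth_gam U : smooth_on U gam.
Proof.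
  unfold gam. apply smooth_mult with (f := fun _ => K0). apply smooth_const.
  apply smooth_inv. apply (smooth_comp U (fun _ => True) u). apply smooth_u.
  apply smooth_ext with (f := fun x => (PI/2) * x). intros; field.
  apply smooth_mult. apply smooth_const. apply smooth_id. auto.
  intros x _. apply Rgt_not_eq, u_pos.
Qed.

Lemma dlim_gam I : exists d, derivable_pt_lim gam I d.
Proof. destruct (smooth_gam (fun _ => True)) as [fs [F0 F1]]. exists (fs 1%nat I). rewrite <- F0. auto. Qed.

Lemma cont_gam I : continuity_pt gam I.
Proof. destruct (dlim_gam I) as [d D]. apply derivable_continuous_pt. exists d; auto. Qed.

Lemma alpha_odd I : alpha (- I) = - alpha I.
Proof.
  rewrite !alpha_gam. unfold gam. replace (PI * - I / 2) with (- (PI * I / 2)) by field.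
  assert (u (- (PI * I/2)) = u (PI*I/2)).
  { set (y := PI * I / 2). destruct (Req_dec y 0) as [E|E]. rewrite E, Ropp_0; auto.
    apply Rmult_eq_reg_l with (- y). 2: lra.
    rewrite u_sinh. replace (- y * u y) with (- (y * u y)) by ring. rewrite u_sinh.
    unfold sinh. rewrite Ropp_involutive. field. }
  rewrite H. ring.
Qed.

Lemma gam_even I : gam (- I) = gam I.
Proof.
  destruct (Req_dec I 0) as [->|H]. rewrite Ropp_0; auto.
  assert (E := alpha_odd I). rewrite !alpha_gam in E.
  apply Rmult_eq_reg_l with (- I). lra. lra.
Qed.

Lemma beta_even I : beta (- I) = beta I.
Proof. rewrite !beta_gam, gam_even. ring. Qed.

Lemma beta_1 : beta 1 = 1.
Proof. unfold beta, alpha. destruct (Req_EM_T 1 0). lra.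
  replace (PI * 1 / 2) with (PI/2) by field. assert (H:= sinhPI2_pos). field. lra. Qed.

Lemma alpha_1 : alpha 1 = 1.
Proof. assert (H := beta_1). unfold beta in H. lra. Qed.

Lemma beta_pow3 I : 0 < I -> I ^ 3 * sinh (PI / 2) / sinh (I * PI / 2) = beta I.
Proof.
  intros H. unfold beta, alpha. destruct (Req_EM_T I 0). lra.
  replace (I * PI / 2) with (PI * I / 2) by field. field.
  rewrite <- (u_sinh (PI*I/2)). assert (Hu := u_pos (PI * I / 2)). assert (HP := PI_RGT_0).
  apply Rgt_not_eq. apply Rmult_lt_0_compat; nra.
Qed.

Lemma alpha_pow2 I : 0 < I -> I ^ 2 * sinh (PI / 2) / sinh (I * PI / 2) = alpha I.
Proof.
  intros H. unfold alpha. destruct (Req_EM_T I 0). lra.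
  replace (I * PI / 2) with (PI * I / 2) by field. field.
  rewrite <- (u_sinh (PI*I/2)). assert (Hu := u_pos (PI * I / 2)). assert (HP := PI_RGT_0).
  apply Rgt_not_eq. apply Rmult_lt_0_compat; nra.
Qed.

Lemma PI_ub : PI <= 33/10.
Proof.
  destruct (PI_ineq 3) as [_ H]. unfold tg_alt, PI_tg in H. simpl in H.
  unfold INR in H; simpl in H. lra.
Qed.

Lemma PI_lb : 3 < PI.
Proof. assert (H := PI2_3_2). lra. Qed.

Lemma exp_lb4 x : 0 <= x -> (1 + x/4)^4 <= exp x.
Proof.
  intros Hx. replace x with (x/4 + x/4 + x/4 + x/4) at 2 by field.
  rewrite !exp_plus. assert (H := exp_ineq1_le (x/4)).
  assert (0 <= 1 + x/4) by lra. simpl.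
  assert (0 <= (1 + x/4) * (1 + x/4)) by nra.
  assert ((1 + x/4) * (1 + x/4) <= exp (x/4) * exp (x/4)) by (apply Rmult_le_compat; lra).
  nra.
Qed.

Definition mfun (y : R) : R := 2 * sinh y - y * cosh y.

Lemma mfun_c : 0 < mfun (PI/2).
Proof.
  unfold mfun, sinh, cosh. set (c := PI/2).
  assert (Hc1 : 3/2 < c) by (unfold c; assert (H := PI_lb); lra).
  assert (Hc2 : c <= 33/20) by (unfold c; assert (H := PI_ub); lra).
  assert (HX := exp_lb4 c ltac:(lra)).
  assert (HXY : exp c * exp (- c) = 1) by (rewrite <- exp_plus; replace (c + - c) with 0 by ring; apply exp_0).
  set (X := exp c) in *. set (Y := exp (-c)) in *.
  assert (HXp : 0 < X) by apply exp_pos.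
  assert (HX2 : 3 <= X).
  { apply Rle_trans with ((1 + c/4)^4); auto. simpl. nra. }
  assert (0 < Y) by apply exp_pos.
  assert (HX3 : 12 <= X * X) by nra.
  apply Rmult_lt_reg_l with (2 * X). lra.
  replace (2 * X * (2 * ((X - Y) / 2) - c * ((X + Y) / 2))) with (2 * (X*X) - 2 * (X * Y) * 2 / 2 - c * (X * X + X * Y)) by field.
  rewrite HXY. nra.
Qed.

Lemma concave_nonneg f f' f'' a b : a < b ->
  (forall x, a <= x <= b -> derivable_pt_lim f x (f' x)) ->
  (forall x, a <= x <= b -> derivable_pt_lim f' x (f'' x)) ->
  (forall x, a <= x <= b -> f'' x <= 0) -> 0 <= f a -> 0 <= f b ->
  forall y, a <= y <= b -> 0 <= f y.
Proof.
  intros Hab D1 D2 Hn Ha Hb y Hy.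
  destruct (Rle_or_lt 0 (f y)) as [|Hf]; auto. exfalso.
  assert (Hy1 : a < y) by (destruct (Req_dec a y); subst; lra).
  assert (Hy2 : y < b) by (destruct (Req_dec y b); subst; lra).
  destruct (MVT_cor2 f f' a y Hy1 (fun x Hx => D1 x ltac:(lra))) as [p [Ep Hp]].
  destruct (MVT_cor2 f f' y b Hy2 (fun x Hx => D1 x ltac:(lra))) as [q [Eq Hq]].
  assert (Hpq : p < q) by lra.
  destruct (MVT_cor2 f' f'' p q Hpq (fun x Hx => D2 x ltac:(lra))) as [r [Er Hr]].
  assert (f'' r <= 0) by (apply Hn; lra).
  assert (f' p < 0). { assert (f' p * (y - a) < 0) by lra. nra. }
  assert (0 < f' q). { assert (0 < f' q * (b - y)) by lra. nra. }
  nra.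
Qed.

Lemma mfun_nonneg y : 0 <= y <= PI/2 -> 0 <= mfun y.
Proof.
  apply concave_nonneg with (f' := fun y => cosh y - y * sinh y) (f'' := fun y => - (y * cosh y)).
  - apply PI2_RGT_0.
  - intros x _. unfold mfun.
    apply dlim_eq with (2 * cosh x - (1 * cosh x + x * sinh x)). ring.
    apply derivable_pt_lim_minus.
    apply dlim_ext with (f := mult_real_fct 2 sinh). reflexivity.
    apply derivable_pt_lim_scal. apply derivable_pt_lim_sinh.
    apply (derivable_pt_lim_mult id cosh). apply derivable_pt_lim_id. apply derivable_pt_lim_cosh.
  - intros x _.
    apply dlim_eq with (sinh x - (1 * sinh x + x * cosh x)). ring.
    apply derivable_pt_lim_minus. apply derivable_pt_lim_cosh.
    apply (derivable_pt_lim_mult id sinh). apply derivable_pt_lim_id. apply derivable_pt_lim_sinh.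
  - intros x Hx. assert (0 < cosh x). { unfold cosh. assert (H1 := exp_pos x). assert (H2 := exp_pos (-x)). lra. }
    nra.
  - unfold mfun. rewrite sinh_0. lra.
  - left. apply mfun_c.
Qed.

Lemma sinh_pos y : 0 < y -> 0 < sinh y.
Proof. intros. rewrite <- sinh_0. apply sinh_lt; auto. Qed.

Lemma cosh_pos y : 0 < cosh y.
Proof. unfold cosh. assert (H1 := exp_pos y). assert (H2 := exp_pos (-y)). lra. Qed.

Lemma hfun_decr y1 y2 : 0 < y1 -> y1 < y2 -> y2 <= PI/2 ->
  sinh y2 / (y2 * y2) <= sinh y1 / (y1 * y1).
Proof.
  intros H1 H2 H3.
  destruct (MVT_cor2 (fun y => sinh y / (y * y)) (fun y => - mfun y / (y*y*y)) y1 y2 H2) as [r [Er Hr]].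
  - intros x Hx.
    apply dlim_ext with (f := div_fct sinh (mult_fct id id)). reflexivity.
    eapply dlim_eq; [|apply derivable_pt_lim_div].
    3: apply (derivable_pt_lim_mult id id); apply derivable_pt_lim_id.
    2: apply derivable_pt_lim_sinh.
    2: unfold mult_fct, id; intro; nra.
    unfold mfun, mult_fct, id, Rsqr. field. lra.
  - assert (0 <= mfun r) by (apply mfun_nonneg; lra).
    assert (0 < r * r * r) by (apply Rmult_lt_0_compat; nra).
    assert (- mfun r / (r * r * r) <= 0).
    { unfold Rdiv. assert (0 < / (r*r*r)) by (apply Rinv_0_lt_compat; auto). nra. }
    nra.
Qed.

Lemma alpha_le1 I : 0 <= I <= 1 -> alpha I <= 1.
Proof.
  intros HI. destruct (Req_dec I 0) as [->|H0].
  { rewrite alpha_gam. lra. }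
  destruct (Req_dec I 1) as [->|H1]. { rewrite alpha_1; lra. }
  assert (HP := PI_RGT_0). assert (HI0 : 0 < I) by (destruct HI as [[|] _]; auto; congruence). assert (HI1 : I < 1) by (destruct HI as [_ [|]]; auto; congruence).
  assert (Hd := hfun_decr (PI/2 * I) (PI/2) ltac:(nra) ltac:(nra) ltac:(lra)).
  rewrite <- (alpha_pow2 I) by lra.
  replace (I * PI / 2) with (PI/2 * I) by field.
  assert (Hs := sinh_pos (PI/2*I) ltac:(nra)).
  assert (Hs2 := sinh_pos (PI/2) ltac:(lra)).
  assert (Hy : 0 < PI/2*I*(PI/2*I)) by (apply Rmult_lt_0_compat; apply Rmult_lt_0_compat; lra).
  assert (Hd' := Rmult_le_compat_r (PI/2*I*(PI/2*I)) _ _ (Rlt_le _ _ Hy) Hd).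
  replace (sinh (PI / 2) / (PI / 2 * (PI / 2)) * (PI / 2 * I * (PI / 2 * I))) with (I^2 * sinh (PI/2)) in Hd' by (field; lra).
  replace (sinh (PI / 2 * I) / (PI / 2 * I * (PI / 2 * I)) * (PI / 2 * I * (PI / 2 * I))) with (sinh (PI/2*I)) in Hd' by (field; lra).
  unfold Rdiv. apply Rle_trans with (sinh (PI/2*I) * / sinh (PI/2*I)).
  apply Rmult_le_compat_r. left; apply Rinv_0_lt_compat; auto. auto.
  right; field; lra.
Qed.

Lemma alpha_nonneg I : 0 <= I -> 0 <= alpha I.
Proof. intros. rewrite alpha_gam. assert (H0 := gam_pos I). nra. Qed.

Lemma dlim_cont f x l : derivable_pt_lim f x l -> continuity_pt f x.
Proof. intros D. apply derivable_continuous_pt. exists l; auto. Qed.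

Lemma derivable_alpha I : exists l, derivable_pt_lim alpha I l.
Proof.
  destruct (dlim_gam I) as [d D]. exists (1 * gam I + I * d).
  apply dlim_ext with (f := mult_fct id gam). intros y; unfold mult_fct, id; rewrite alpha_gam; auto.
  apply derivable_pt_lim_mult; auto. apply derivable_pt_lim_id.
Qed.

Lemma cont_alpha : continuity alpha.
Proof. intros I. destruct (derivable_alpha I) as [l D]. eapply dlim_cont; eauto. Qed.

Lemma cont_beta : continuity beta.
Proof. intros I. unfold beta. apply (continuity_pt_mult id alpha). apply derivable_continuous_pt, derivable_id. apply cont_alpha. Qed.

Lemma ivt_up f a b v : continuity f -> a <= b -> f a <= v <= f b -> exists z, a <= z <= b /\ f z = v.
Proof.
  intros Hc Hab Hv.
  destruct (Req_dec (f a) v) as [E|E]. exists a; split; [lra|auto].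
  destruct (Req_dec (f b) v) as [E'|E']. exists b; split; [lra|auto].
  destruct (IVT (fun x => f x - v) a b) as [z [Hz Ez]].
  - apply continuity_minus; auto. apply continuity_const. intros x y; auto.
  - destruct (Req_dec a b); subst; [|lra]. lra.
  - lra.
  - lra.
  - exists z. split; auto. lra.
Qed.

Lemma ivt_down f a b v : continuity f -> a <= b -> f b <= v <= f a -> exists z, a <= z <= b /\ f z = v.
Proof.
  intros Hc Hab Hv.
  destruct (ivt_up (fun x => - f x) a b (- v)) as [z [Hz Ez]].
  - apply continuity_opp; auto.
  - auto.
  - lra.
  - exists z. split; auto. lra.
Qed.

Lemma sinh_lb y : 0 <= y -> y^4 / 512 <= sinh y.
Proof.
  intros Hy. unfold sinh. assert (H := exp_lb4 y Hy).
  assert (H2 : exp (-y) <= 1). { rewrite <- exp_0. destruct (Req_dec y 0). subst. rewrite Ropp_0. lra. left; apply exp_increasing; lra. }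
  assert (H3 : (y/4)^4 <= (1 + y/4)^4 - 1).
  { assert (0 <= y/4) by lra. simpl. nra. }
  replace (y^4/512) with ((y/4)^4/2) by field. lra.
Qed.

Lemma beta_small eps M : 0 < eps -> exists J, M < J /\ 0 < J /\ beta J < eps.
Proof.
  intros He. set (c := PI/2). assert (Hc : 3/2 < c) by (unfold c; assert (H := PI_lb); lra).
  assert (Hs := sinh_pos c ltac:(lra)).
  set (K := 512 * sinh c / (c^4 * eps)).
  assert (HK : 0 < K). { unfold K. unfold Rdiv. apply Rmult_lt_0_compat. lra. apply Rinv_0_lt_compat. apply Rmult_lt_0_compat; auto. apply pow_lt; lra. }
  exists (Rabs M + K + 1). assert (HM := Rabs_pos M). assert (HMM := Rle_abs M).
  set (J := Rabs M + K + 1). assert (HJ : 0 < J) by (unfold J; lra).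
  split; [unfold J; lra|]. split; auto.
  rewrite <- beta_pow3 by auto. fold c.
  replace (J * PI / 2) with (c * J) by (unfold c; field).
  assert (Hl := sinh_lb (c*J) ltac:(nra)).
  assert (Hc4 : 0 < (c*J)^4) by (apply pow_lt; nra).
  assert (Hsp : 0 < sinh (c * J)) by lra.
  apply Rle_lt_trans with (J^3 * sinh c / ((c*J)^4/512)).
  - unfold Rdiv. apply Rmult_le_compat_l. assert (0 < J^3) by (apply pow_lt; lra). nra.
    apply Rinv_le_contravar; lra.
  - replace (J ^ 3 * sinh c / ((c * J) ^ 4 / 512)) with (K * eps / J) by (unfold K; field; repeat split; lra).
    apply Rmult_lt_reg_r with J. auto. replace (K * eps / J * J) with (K * eps) by (field; lra).
    assert (K < J) by (unfold J; lra). nra.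
Qed.

Lemma beta_0 : beta 0 = 0.
Proof. unfold beta; ring. Qed.
Lemma alpha_0 : alpha 0 = 0.
Proof. rewrite alpha_gam; ring. Qed.

Lemma alpha_le_beta J : 1 <= J -> alpha J <= beta J.
Proof. intros. unfold beta. assert (0 <= alpha J) by (apply alpha_nonneg; lra). nra. Qed.

Lemma beta_le_alpha J : 0 <= J <= 1 -> beta J <= alpha J.
Proof. intros. unfold beta. assert (0 <= alpha J) by (apply alpha_nonneg; lra). nra. Qed.

Section Dom.
Variables (m bmax Ip Ipp : R).
Hypothesis Hm : 0 < m.
Hypothesis Hbmax : is_max_of (fun b => exists I, 0 <= I /\ b = beta I) bmax.
Hypothesis Hroots : 1 / bmax <= m ->
         is_max_of (fun I => 0 < I /\
                     I ^ 3 * sinh (PI / 2) / sinh (I * PI / 2) = 1 / m) Ipp /\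
         (m <= 1 ->
            is_min_of (fun I => 0 < I /\
                        I ^ 3 * sinh (PI / 2) / sinh (I * PI / 2) = 1 / m) Ip) /\
         (1 <= m ->
            is_min_of (fun I => 0 < I /\
                        I ^ 2 * sinh (PI / 2) / sinh (I * PI / 2) = 1 / m) Ip).

Lemma bmax_ge1 : 1 <= bmax.
Proof. destruct Hbmax as [_ H]. rewrite <- beta_1. apply H. exists 1; split; [lra|auto]. Qed.

Lemma beta_le_bmax J : 0 <= J -> beta J <= bmax.
Proof. intros HJ. destruct Hbmax as [_ H]. apply H. exists J; auto. Qed.

Lemma dom_pos J : 0 <= J ->
  ((m < 1/bmax) \/ (J < - Ipp \/ (- Ip < J /\ J < Ip) \/ Ipp < J)) ->
  m * alpha J < 1 /\ m * beta J < 1.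
Proof.
  intros HJ Hcase. assert (Hb1 := bmax_ge1).
  assert (HaJ := alpha_nonneg J HJ). assert (HbJ : 0 <= beta J) by (unfold beta; nra).
  destruct (Rlt_or_le m (1/bmax)) as [HA|HB].
  - assert (m * bmax < 1).
    { apply Rmult_lt_reg_r with (/ bmax). apply Rinv_0_lt_compat; lra.
      rewrite Rmult_assoc, Rinv_r, Rmult_1_r by lra. unfold Rdiv in HA. lra. }
    assert (Hb := beta_le_bmax J HJ).
    assert (m * beta J < 1) by nra. split; auto.
    destruct (Rle_or_lt 1 J) as [HJ1|HJ1].
    + assert (Hab := alpha_le_beta J HJ1). nra.
    + assert (alpha J <= 1) by (apply alpha_le1; lra).
      assert (m < 1). { assert (1 / bmax <= 1). { unfold Rdiv. rewrite Rmult_1_l. rewrite <- Rinv_1. apply Rinv_le_contravar; lra. } lra. }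
      nra.
  - destruct (Hroots HB) as [HIpp [HIp3 HIp2]].
    assert (Him : 0 < 1 / m) by (unfold Rdiv; rewrite Rmult_1_l; apply Rinv_0_lt_compat; auto).
    assert (Hmeq : m * (1/m) = 1) by (field; lra).
    assert (root3 : forall y, 0 < y -> beta y = 1/m -> y <= Ipp).
    { intros y Hy E. destruct HIpp as [_ H]. apply H. split; auto. rewrite beta_pow3; auto. }
    assert (HIpp1 : 1 <= Ipp).
    { destruct (Rle_or_lt 1 m) as [Hm1|Hm1].
      - destruct (beta_small (1/m) 1 Him) as [J1 [HJ1 [_ HJ1b]]].
        destruct (ivt_down beta 1 J1 (1/m) cont_beta ltac:(lra)) as [y [Hy Ey]].
        { rewrite beta_1. split; [lra|]. unfold Rdiv; rewrite Rmult_1_l. rewrite <- Rinv_1. apply Rinv_le_contravar; lra. }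
        assert (y <= Ipp) by (apply root3; lra). lra.
      - destruct Hbmax as [[Is [HIs Es]] _].
        assert (HIs1 : 1 <= Is).
        { destruct (Rle_or_lt 1 Is); auto. assert (alpha Is <= 1) by (apply alpha_le1; lra).
          assert (0 <= alpha Is) by (apply alpha_nonneg; lra). unfold beta in Es. nra. }
        destruct (ivt_up beta 1 Is (1/m) cont_beta HIs1) as [y [Hy Ey]].
        { rewrite beta_1, <- Es. split.
          - unfold Rdiv; rewrite Rmult_1_l. rewrite <- Rinv_1. left. apply Rinv_lt_contravar; lra.
          - apply Rmult_le_reg_r with m; auto. replace (1/m*m) with 1 by (field; lra).
            apply Rmult_le_reg_r with (/bmax). apply Rinv_0_lt_compat; lra.
            replace (bmax * m * / bmax) with m by (field; lra). unfold Rdiv in HB. lra. }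
        assert (y <= Ipp) by (apply root3; lra). lra. }
    destruct Hcase as [Hc|[Hc|[Hc|Hc]]]; [lra|lra| |].
    +
      destruct (Rle_or_lt 1 m) as [Hm1|Hm1].
      * destruct (HIp2 Hm1) as [[HIp0 _] Hmin].
        assert (Ha : alpha J < 1/m).
        { destruct (Rlt_or_le (alpha J) (1/m)) as [|Hge]; auto. exfalso.
          destruct (ivt_up alpha 0 J (1/m) cont_alpha HJ) as [y [Hy Ey]].
          { rewrite alpha_0. lra. }
          assert (y <> 0) by (intro; subst; rewrite alpha_0 in Ey; lra).
          assert (Ip <= y). { apply Hmin. split. lra. rewrite alpha_pow2; auto. lra. }
          lra. }
        assert (HIp1 : Ip <= 1).
        { destruct (ivt_up alpha 0 1 (1/m) cont_alpha ltac:(lra)) as [y [Hy Ey]].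
          { rewrite alpha_0, alpha_1. split. lra. unfold Rdiv; rewrite Rmult_1_l. rewrite <- Rinv_1. apply Rinv_le_contravar; lra. }
          assert (y <> 0) by (intro; subst; rewrite alpha_0 in Ey; lra).
          assert (Ip <= y). { apply Hmin. split. lra. rewrite alpha_pow2; auto. lra. }
          lra. }
        assert (HbJ' := beta_le_alpha J ltac:(lra)).
        split. nra. nra.
      * destruct (HIp3 ltac:(lra)) as [[HIp0 _] Hmin].
        assert (Hb : beta J < 1/m).
        { destruct (Rlt_or_le (beta J) (1/m)) as [|Hge]; auto. exfalso.
          destruct (ivt_up beta 0 J (1/m) cont_beta HJ) as [y [Hy Ey]].
          { rewrite beta_0. lra. }
          assert (y <> 0) by (intro; subst; rewrite beta_0 in Ey; lra).
          assert (Ip <= y). { apply Hmin. split. lra. rewrite beta_pow3; auto. lra. }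
          lra. }
        split; [|nra].
        destruct (Rle_or_lt 1 J) as [HJ1|HJ1].
        -- assert (Hab := alpha_le_beta J HJ1). nra.
        -- assert (alpha J <= 1) by (apply alpha_le1; lra). nra.
    +
      assert (Hb : beta J < 1/m).
      { destruct (Rlt_or_le (beta J) (1/m)) as [|Hge]; auto. exfalso.
        destruct (beta_small (1/m) J Him) as [J1 [HJ1 [_ HJ1b]]].
        destruct (ivt_down beta J J1 (1/m) cont_beta ltac:(lra)) as [y [Hy Ey]].
        { lra. }
        assert (y <= Ipp) by (apply root3; lra). lra. }
      assert (Hab := alpha_le_beta J ltac:(lra)). split; nra.
Qed.
End Dom.

Lemma Rabs_lt_between x a : Rabs x < a -> - a < x < a.
Proof. unfold Rabs; destruct (Rcase_abs x); lra. Qed.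
Lemma Rabs_le_between x a : Rabs x <= a -> - a <= x <= a.
Proof. unfold Rabs; destruct (Rcase_abs x); lra. Qed.

Section Fsec.
Variables I k : R.
Hypothesis Hk : Rabs k < 1.
Hypothesis Hx : Rabs (I * k) < 1.

Definition Ff (p : R) : R := p + I * asin (k * sin p).
Definition qf (p : R) : R := sqrt (1 - (k * sin p) * (k * sin p)).
Definition Ffd (p : R) : R := 1 + I * (k * cos p / qf p).

Lemma k2 : k * k < 1.
Proof. apply Rabs_lt_between in Hk. nra. Qed.
Lemma x2 : (I*k) * (I*k) < 1.
Proof. apply Rabs_lt_between in Hx. nra. Qed.

Lemma ksin_bound p : -1 < k * sin p < 1.
Proof.
  assert (H := SIN_bound p). assert (H2 := k2). assert (H3 : (k * sin p) * (k * sin p) < 1).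
  { assert (sin p * sin p <= 1) by nra. nra. }
  split; nra.
Qed.

Lemma qf_pos p : 0 < qf p.
Proof. unfold qf. apply sqrt_lt_R0. assert (H := ksin_bound p). nra. Qed.

Lemma Ff_deriv p : derivable_pt_lim Ff p (Ffd p).
Proof.
  unfold Ff, Ffd.
  apply derivable_pt_lim_plus. apply derivable_pt_lim_id.
  apply dlim_ext with (f := mult_real_fct I (comp asin (mult_real_fct k sin))).
  { intros; reflexivity. }
  apply derivable_pt_lim_scal.
  apply dlim_eq with (/ sqrt (1 - (k * sin p) * (k * sin p)) * (k * cos p)).
  { unfold qf. field. apply Rgt_not_eq, qf_pos. }
  apply derivable_pt_lim_comp with (f2 := asin) (f1 := mult_real_fct k sin).
  - apply derivable_pt_lim_scal, derivable_pt_lim_sin.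
  - unfold mult_real_fct. eapply dlim_eq; [|apply dlim_asin, ksin_bound]. ring.
Qed.

Lemma Ffd_pos p : 0 < Ffd p.
Proof.
  unfold Ffd. assert (Hq := qf_pos p).
  assert (Hq2 : qf p * qf p = 1 - (k * sin p) * (k * sin p)).
  { unfold qf. apply sqrt_sqrt. assert (H := ksin_bound p). nra. }
  assert (H1 := x2). assert (H2 := k2). assert (H3 := sin2_cos2 p). unfold Rsqr in H3.
  assert (Hlt : (I * k * cos p) * (I * k * cos p) < qf p * qf p).
  { rewrite Hq2. assert (0 <= cos p * cos p) by nra. assert (0 <= sin p * sin p) by nra.
    replace (I * k * cos p * (I * k * cos p)) with ((I*k)*(I*k) * (cos p * cos p)) by ring.
    replace (k * sin p * (k * sin p)) with ((k*k) * (sin p * sin p)) by ring.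
    destruct (Rle_or_lt (1/2) (cos p * cos p)).
    - assert ((1 - (I*k)*(I*k)) * (cos p * cos p) > 0) by (apply Rmult_lt_0_compat; lra).
      assert ((1 - k*k) * (sin p * sin p) >= 0) by (apply Rle_ge, Rmult_le_pos; lra). nra.
    - assert ((1 - k*k) * (sin p * sin p) > 0) by (apply Rmult_lt_0_compat; lra).
      assert ((1 - (I*k)*(I*k)) * (cos p * cos p) >= 0) by (apply Rle_ge, Rmult_le_pos; lra). nra. }
  assert (Habs : - qf p < I * k * cos p) by nra.
  replace (1 + I * (k * cos p / qf p)) with ((qf p + I * k * cos p) / qf p) by (field; lra).
  unfold Rdiv. apply Rmult_lt_0_compat. lra. apply Rinv_0_lt_compat; lra.
Qed.

Definition Ff_der : derivable Ff := fun p => exist _ (Ffd p) (Ff_deriv p).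

Lemma Ff_incr : strict_increasing Ff.
Proof.
  apply (positive_derivative Ff Ff_der). intros p. simpl. apply Ffd_pos.
Qed.

Lemma Ff_inj p1 p2 : Ff p1 = Ff p2 -> p1 = p2.
Proof.
  intros E. destruct (Rtotal_order p1 p2) as [H|[H|H]]; auto.
  apply Ff_incr in H. lra. apply Ff_incr in H. lra.
Qed.

Lemma Ff_cont : continuity Ff.
Proof. intros p. eapply dlim_cont. apply Ff_deriv. Qed.

Lemma Ff_near p : Rabs (Ff p - p) <= Rabs I * 2.
Proof.
  unfold Ff. replace (p + I * asin (k * sin p) - p) with (I * asin (k * sin p)) by ring.
  rewrite Rabs_mult. apply Rmult_le_compat_l. apply Rabs_pos.
  assert (H := asin_bound (k * sin p)). assert (H2 := PI_ub).
  apply Rabs_le. lra.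
Qed.

Lemma Ff_surj th : exists p, Ff p = th.
Proof.
  set (M := Rabs I * 2 + 1). assert (HM : 0 < M) by (unfold M; assert (H := Rabs_pos I); lra).
  destruct (ivt_up Ff (th - M) (th + M) th Ff_cont ltac:(lra)) as [p [_ Ep]].
  - assert (H1 := Ff_near (th - M)). assert (H2 := Ff_near (th + M)).
    apply Rabs_le_between in H1. apply Rabs_le_between in H2. unfold M in *. lra.
  - exists p; auto.
Qed.

Lemma Ff_0 : Ff 0 = 0.
Proof. unfold Ff. rewrite sin_0, Rmult_0_r, asin_0. ring. Qed.

Lemma Ff_sym p : Ff (2 * PI - p) = 2 * PI - Ff p.
Proof.
  unfold Ff. replace (2 * PI - p) with (- p + 2 * INR 1 * PI) by (simpl; ring).
  rewrite sin_period, sin_neg. replace (k * - sin p) with (- (k * sin p)) by ring.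
  rewrite asin_opp. simpl. ring.
Qed.

Lemma Ff_2PI : Ff (2 * PI) = 2 * PI.
Proof. replace (2 * PI) with (2 * PI - 0) by ring. rewrite Ff_sym, Ff_0. ring. Qed.

Lemma Ff_PI : Ff PI = PI.
Proof. unfold Ff. rewrite sin_PI, Rmult_0_r, asin_0. ring. Qed.

End Fsec.

Lemma level_alg (r I c : R) : r <> 0 -> (r*I)*(r*I) < 1 -> (r*I*I)*(r*I*I) < 1 -> -1 <= c <= 1 ->
  (r * c + sqrt (1 - (r*I)*(r*I)*(1 - c*c)) = 1 <->
   c = r*I*I / (1 + sqrt (1 - (r*I)*(r*I) + (r*I*I)*(r*I*I)))).
Proof.
  intros Hr Hk Hx Hc.
  set (S := sqrt (1 - (r*I)*(r*I) + (r*I*I)*(r*I*I))).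
  assert (HS2 : S * S = 1 - (r*I)*(r*I) + (r*I*I)*(r*I*I)).
  { unfold S. apply sqrt_sqrt. assert (0 <= (r*I*I)*(r*I*I)) by nra. lra. }
  assert (HS0 : 0 < S). { unfold S. apply sqrt_lt_R0. assert (0 <= (r*I*I)*(r*I*I)) by nra. lra. }
  assert (Hq0 : 0 <= 1 - (r*I)*(r*I)*(1 - c*c)).
  { assert (0 <= 1 - c*c) by nra. assert (0 <= (r*I)*(r*I)) by nra. nra. }
  assert (Hq2 := sqrt_sqrt _ Hq0). assert (Hqp := sqrt_pos (1 - (r*I)*(r*I)*(1 - c*c))).
  set (q := sqrt (1 - (r*I)*(r*I)*(1 - c*c))) in *.
  split.
  - intros E. assert (Eq : q = 1 - r*c) by lra.
    assert (HQ : r * ((I*I-1)*c*c*r + 2*c - r*I*I) = 0).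
    { rewrite Eq in Hq2. nra. }
    assert (HQ' : (I*I-1)*c*c*r + 2*c - r*I*I = 0).
    { apply Rmult_integral in HQ. destruct HQ; auto. contradiction. }
    set (w := 1 + r*(I*I-1)*c).
    assert (Hw2 : w * w = S * S). { rewrite HS2. unfold w. nra. }
    assert (Hw : w = S \/ w = - S). { nra. }
    destruct Hw as [Hw|Hw].
    + apply Rmult_eq_reg_r with (1 + S). 2: lra.
      unfold Rdiv. rewrite Rmult_assoc, Rinv_l, Rmult_1_r by lra.
      unfold w in Hw. nra.
    + exfalso. unfold w in Hw.
      destruct (Rlt_or_le (I*I) 1) as [HI|HI].
      * assert (r * c * (1 - I*I) = 1 + S) by nra.
        assert (r * c <= 1) by lra.
        assert (0 < 1 - I*I) by lra. nra.
      * assert (Hrc : r * c * (I*I - 1) = - (1 + S)) by nra.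
        assert (Habs : Rabs (r*c) <= Rabs r).
        { rewrite Rabs_mult. assert (Rabs c <= 1) by (apply Rabs_le; lra).
          assert (0 <= Rabs r) by apply Rabs_pos. nra. }
        assert (Hrx : Rabs r * (I*I) < 1).
        { assert (Rabs (r*I*I) < 1).
          { apply Rabs_def1; nra. }
          replace (r*I*I) with (r * (I*I)) in H by ring. rewrite Rabs_mult in H.
          rewrite (Rabs_right (I*I)) in H by nra. auto. }
        assert (Rabs (r*c) * (I*I - 1) = 1 + S).
        { replace (1 + S) with (Rabs (- (1+S))) by (rewrite Rabs_Ropp; apply Rabs_right; lra).
          rewrite <- Hrc. rewrite (Rabs_mult (r*c) (I*I-1)). rewrite (Rabs_right (I*I-1)) by lra. auto. }
        assert (Rabs r * (I*I - 1) >= 1 + S) by nra. nra.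
  - intros Ec.
    assert (Hc1 : c * (1 + S) = r*I*I).
    { rewrite Ec. field. lra. }
    assert (Hrc : r * c * (1 + S) = (r*I)*(r*I)) by (rewrite Rmult_assoc, Hc1; ring).
    assert (Hrc1 : r * c <= (r*I)*(r*I)).
    { assert (0 <= (r*I)*(r*I)) by nra. nra. }
    assert (Hw : r * (I*I - 1) * c * (1 + S) = (S - 1) * (1 + S)).
    { replace (r * (I*I - 1) * c * (1 + S)) with (r * (I*I-1) * (c * (1+S))) by ring.
      rewrite Hc1. nra. }
    assert (Hw' : r * (I*I - 1) * c = S - 1).
    { apply Rmult_eq_reg_r with (1+S); lra. }
    assert (Hsq : (1 - r*c) * (1 - r*c) = 1 - (r*I)*(r*I)*(1 - c*c)).
    { nra. }
    assert (q = 1 - r * c).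
    { unfold q. rewrite <- Hsq. apply sqrt_square. lra. }
    lra.
Qed.

Definition kf mu I := mu * (I * gam I).
Definition Sf mu I := sqrt (1 - kf mu I * kf mu I + (I * kf mu I) * (I * kf mu I)).
Definition c0f mu I := (I * kf mu I) / (1 + Sf mu I).
Definition thlf mu I := PI/2 - asin (c0f mu I) + I * asin (kf mu I * sqrt (1 - c0f mu I * c0f mu I)).
Definition thrf mu I := 2 * PI - thlf mu I.

Section Main.
Variables a00 a10 a01 I : R.
Hypothesis Ha : a10 * a01 <> 0.
Definition mu0 := a10 / a01.
Hypothesis Hk : Rabs (mu0 * alpha I) < 1.
Hypothesis Hxb : Rabs (mu0 * beta I) < 1.
Definition kk := mu0 * alpha I.

Lemma Hx' : Rabs (I * kk) < 1.
Proof. unfold kk. replace (I * (mu0 * alpha I)) with (mu0 * beta I) by (unfold beta; ring). auto. Qed.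

Lemma a01_nz : a01 <> 0.
Proof. intro E. apply Ha. rewrite E. ring. Qed.
Lemma a10_nz : a10 <> 0.
Proof. intro E. apply Ha. rewrite E. ring. Qed.

Lemma tau_spec th : - tau_star mu0 I th = xiM mu0 I (th - I * tau_star mu0 I th).
Proof.
  unfold tau_star. apply epsilon_spec.
  destruct (Ff_surj I kk Hk th) as [p Ep].
  exists (asin (kk * sin p)). unfold xiM. fold kk.
  replace (th - I * asin (kk * sin p)) with p. reflexivity.
  rewrite <- Ep. unfold Ff. ring.
Qed.

Definition Gf th := th - I * tau_star mu0 I th.

Lemma tau_eq th : tau_star mu0 I th = asin (kk * sin (Gf th)).
Proof. assert (H := tau_spec th). unfold xiM in H. fold kk in H. unfold Gf. lra. Qed.

Lemma FG th : Ff I kk (Gf th) = th.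
Proof. unfold Ff. rewrite <- tau_eq. unfold Gf. ring. Qed.

Lemma GF p : Gf (Ff I kk p) = p.
Proof. apply (Ff_inj I kk Hk Hx'). apply FG. Qed.

Definition Hf p := A00 a00 + A10 a10 I * cos p + A01 a01 * qf kk p.

Lemma Lstar_eq th : Lstar a00 a10 a01 I th = Hf (Gf th).
Proof.
  unfold Lstar. fold mu0. fold (Gf th). rewrite tau_eq. unfold Hf, qf.
  rewrite cos_asin. unfold Rsqr. reflexivity.
  assert (H := ksin_bound kk Hk (Gf th)). lra.
Qed.

Lemma Lstar_fun : (fun th => Lstar a00 a10 a01 I th) = (fun th => Hf (Gf th)).
Proof. apply functional_extensionality. apply Lstar_eq. Qed.


Definition Hfd p := - sin p * (A10 a10 I + A01 a01 * kk * kk * cos p / qf kk p).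

Lemma Hf_deriv p : derivable_pt_lim Hf p (Hfd p).
Proof.
  apply is_derive_Reals. unfold Hf, Hfd, qf.
  assert (H := ksin_bound kk Hk p).
  assert (Hq : 0 < 1 - kk * sin p * (kk * sin p)) by nra.
  assert (Hs : 0 < sqrt (1 - kk * sin p * (kk * sin p))) by (apply sqrt_lt_R0; auto).
  auto_derive. auto.
  replace (1 + - (kk * sin p * (kk * sin p))) with (1 - kk * sin p * (kk * sin p)) by ring.
  field. lra.
Qed.

Lemma Gf_incr y1 y2 : y1 < y2 -> Gf y1 < Gf y2.
Proof.
  intros H. destruct (Rlt_or_le (Gf y1) (Gf y2)) as [|H2]; auto. exfalso.
  destruct H2 as [H2|H2].
  - apply (Ff_incr I kk Hk Hx') in H2. rewrite !FG in H2. lra.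
  - assert (E : Ff I kk (Gf y2) = Ff I kk (Gf y1)) by (rewrite H2; auto). rewrite !FG in E. lra.
Qed.

Lemma Gf_le y1 y2 : y1 <= y2 -> Gf y1 <= Gf y2.
Proof. intros [H|H]. left; apply Gf_incr; auto. subst; lra. Qed.

Lemma Gf_cont th : continuity_pt Gf th.
Proof.
  set (lb := Gf th - 1). set (ub := Gf th + 1).
  apply (continuity_pt_recip_interv (Ff I kk) Gf lb ub).
  - unfold lb, ub; lra.
  - intros x y _ Hxy _. apply (Ff_incr I kk Hk Hx'); auto.
  - intros x _ _. unfold comp, id. apply FG.
  - intros x H1 H2. apply Gf_le in H1. apply Gf_le in H2. rewrite GF in H1, H2. lra.
  - intros a _. apply (Ff_cont I kk Hk).
  - split.
    + rewrite <- (FG th). apply (Ff_incr I kk Hk Hx'). unfold lb; lra.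
    + rewrite <- (FG th). apply (Ff_incr I kk Hk Hx'). unfold ub; lra.
Qed.

Lemma Gf_deriv th : derivable_pt_lim Gf th (1 / Ffd I kk (Gf th)).
Proof.
  assert (Prg_incr : Gf (th - 1) <= Gf th <= Gf (th + 1)) by (split; apply Gf_le; lra).
  assert (D := derivable_pt_lim_recip_interv (Ff I kk) Gf (th - 1) (th + 1) th
     (fun a _ => Ff_der I kk Hk a) (Gf_cont th) ltac:(lra) ltac:(lra) Prg_incr
     (fun x _ => FG x)).
  simpl in D. apply D. apply Rgt_not_eq. apply (Ffd_pos I kk Hk Hx').
Qed.

Lemma Lstar_deriv th : derivable_pt_lim (fun t => Lstar a00 a10 a01 I t) th
   (Hfd (Gf th) * (1 / Ffd I kk (Gf th))).
Proof.
  rewrite Lstar_fun.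
  apply (derivable_pt_lim_comp Gf Hf th). apply Gf_deriv. apply Hf_deriv.
Qed.


Lemma kk_kf : kk = kf mu0 I.
Proof. unfold kk, kf. rewrite alpha_gam. ring. Qed.

Definition rho := mu0 * gam I.
Lemma kk_rho : kk = rho * I.
Proof. rewrite kk_kf. unfold kf, rho. ring. Qed.
Lemma mu0_nz : mu0 <> 0.
Proof. unfold mu0. assert (H1 := a10_nz). assert (H2 := a01_nz). unfold Rdiv.
  apply Rmult_integral_contrapositive. split; auto. apply Rinv_neq_0_compat; auto. Qed.
Lemma rho_nz : rho <> 0.
Proof. unfold rho. apply Rmult_integral_contrapositive. split. apply mu0_nz. apply Rgt_not_eq, gam_pos. Qed.
Lemma A01_nz : A01 a01 <> 0.
Proof. unfold A01. assert (H := sinhPI2_pos). assert (H2 := PI_RGT_0). assert (H3 := a01_nz).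
  unfold Rdiv. apply Rmult_integral_contrapositive. split.
  apply Rmult_integral_contrapositive. split; auto. lra. apply Rinv_neq_0_compat; lra. Qed.
Lemma A10_rho : A10 a10 I = rho * A01 a01.
Proof. unfold rho, mu0. apply A10_gam, a01_nz. Qed.

Definition c0 := c0f mu0 I.
Definition S0 := Sf mu0 I.

Lemma k2' : kk * kk < 1.
Proof. apply Rabs_lt_between in Hk. fold kk in Hk. nra. Qed.
Lemma x2' : (I*kk) * (I*kk) < 1.
Proof. assert (H := Hx'). apply Rabs_lt_between in H. nra. Qed.

Lemma S0_pos : 0 < S0.
Proof. unfold S0, Sf. rewrite <- kk_kf. apply sqrt_lt_R0. assert (H := k2'). assert (0 <= (I*kk)*(I*kk)) by nra. lra. Qed.

Lemma c0_bound : -1 < c0 < 1.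
Proof.
  unfold c0, c0f. fold S0. rewrite <- kk_kf. assert (H := S0_pos). assert (H2 := x2').
  assert (-1 < I * kk < 1) by nra.
  split.
  - apply Rmult_lt_reg_r with (1 + S0). lra. unfold Rdiv. rewrite Rmult_assoc, Rinv_l, Rmult_1_r by lra. nra.
  - apply Rmult_lt_reg_r with (1 + S0). lra. unfold Rdiv. rewrite Rmult_assoc, Rinv_l, Rmult_1_r by lra. nra.
Qed.

Definition phi0 := PI/2 - asin c0.

Lemma phi0_bound : 0 < phi0 < PI.
Proof. unfold phi0. assert (H := asin_bound_lt c0 c0_bound). lra. Qed.

Lemma cos_phi0 : cos phi0 = c0.
Proof. unfold phi0. rewrite cos_shift. apply sin_asin. assert (H := c0_bound). lra. Qed.

Lemma sin_phi0 : sin phi0 = sqrt (1 - c0 * c0).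
Proof. unfold phi0. rewrite sin_shift. rewrite cos_asin. reflexivity. assert (H := c0_bound). lra. Qed.

Lemma thl_eq : thlf mu0 I = Ff I kk phi0.
Proof. unfold thlf, Ff. fold c0. rewrite sin_phi0, kk_kf. unfold phi0. ring. Qed.

Lemma qf_cos p : qf kk p = sqrt (1 - (rho*I)*(rho*I)*(1 - cos p * cos p)).
Proof. unfold qf. rewrite <- kk_rho. f_equal. assert (H := sin2_cos2 p). unfold Rsqr in H. nra. Qed.

Lemma c0_rho : c0 = rho*I*I / (1 + sqrt (1 - (rho*I)*(rho*I) + (rho*I*I)*(rho*I*I))).
Proof.
  unfold c0, c0f, Sf. rewrite <- kk_kf, kk_rho. f_equal. ring. f_equal. f_equal. ring.
Qed.

Lemma Hf_level p : Hf p = A00 a00 + A01 a01 <-> cos p = c0.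
Proof.
  rewrite c0_rho. rewrite <- (level_alg rho I (cos p)).
  - unfold Hf. rewrite A10_rho, qf_cos. assert (H := A01_nz). split; intros E.
    + apply Rmult_eq_reg_l with (A01 a01); auto. lra.
    + assert (E2 : A01 a01 * (rho * cos p + sqrt (1 - rho * I * (rho * I) * (1 - cos p * cos p))) = A01 a01 * 1) by (rewrite E; auto).
      lra.
  - apply rho_nz.
  - rewrite <- kk_rho. apply k2'.
  - replace (rho * I * I) with (I * kk) by (rewrite kk_rho; ring). apply x2'.
  - apply COS_bound.
Qed.

Lemma cos_level p : 0 <= p < 2 * PI -> (cos p = c0 <-> p = phi0 \/ p = 2 * PI - phi0).
Proof.
  intros Hp. assert (Hb := phi0_bound). split.
  - intros E. rewrite <- cos_phi0 in E.
    destruct (Rle_or_lt p PI) as [H|H].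
    + left. apply cos_inj; lra.
    + right. assert (cos (2 * PI - p) = cos p).
      { replace (2 * PI - p) with (- p + 2 * INR 1 * PI) by (simpl; ring). rewrite cos_period, cos_neg. auto. }
      assert (2 * PI - p = phi0) by (apply cos_inj; lra). lra.
  - intros [->| ->]. apply cos_phi0.
    replace (2 * PI - phi0) with (- phi0 + 2 * INR 1 * PI) by (simpl; ring). rewrite cos_period, cos_neg. apply cos_phi0.
Qed.

Lemma Gf_range th : 0 <= th < 2 * PI -> 0 <= Gf th < 2 * PI.
Proof.
  intros H. split.
  - destruct (Rle_or_lt 0 (Gf th)) as [|H2]; auto. apply (Ff_incr I kk Hk Hx') in H2.
    rewrite FG, Ff_0 in H2. lra.
  - destruct (Rlt_or_le (Gf th) (2*PI)) as [|H2]; auto. exfalso.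
    destruct H2 as [H2|H2].
    + apply (Ff_incr I kk Hk Hx') in H2. rewrite FG, Ff_2PI in H2. lra.
    + assert (E := FG th). rewrite <- H2, Ff_2PI in E. lra.
Qed.

Lemma level_set th : 0 <= th < 2 * PI ->
  (Lstar a00 a10 a01 I th = A00 a00 + A01 a01 <-> th = thlf mu0 I \/ th = thrf mu0 I).
Proof.
  intros Hth. rewrite Lstar_eq, Hf_level, (cos_level _ (Gf_range th Hth)).
  unfold thrf. rewrite thl_eq. rewrite <- Ff_sym. split.
  - intros [E|E]; [left|right]; rewrite <- E; symmetry; apply FG.
  - intros [E|E]; [left|right]; rewrite E; apply GF.
Qed.

Lemma key_nz : A10 a10 I + A01 a01 * kk * kk * c0 / qf kk phi0 <> 0.
Proof.
  assert (Hq := qf_pos kk Hk phi0).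
  assert (Hl : Hf phi0 = A00 a00 + A01 a01) by (apply Hf_level, cos_phi0).
  unfold Hf in Hl. rewrite A10_rho, cos_phi0 in Hl.
  assert (H01 := A01_nz).
  assert (Eq : qf kk phi0 = 1 - rho * c0).
  { apply Rmult_eq_reg_l with (A01 a01); auto. lra. }
  rewrite A10_rho.
  assert (HS := S0_pos).
  assert (Hc1 : c0 * (1 + S0) = rho * I * I).
  { unfold c0, c0f. fold S0. rewrite <- kk_kf, kk_rho. field. lra. }
  assert (HS2 : S0 * S0 = 1 - (rho*I)*(rho*I) + (rho*I*I)*(rho*I*I)).
  { unfold S0, Sf. rewrite <- kk_kf, kk_rho. rewrite sqrt_sqrt. ring.
    assert (H := k2'). rewrite kk_rho in H. assert (0 <= (rho*I*I)*(rho*I*I)) by nra. nra. }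
  assert (Hw : rho * (I*I - 1) * c0 = S0 - 1).
  { apply Rmult_eq_reg_r with (1 + S0). 2: lra.
    replace (rho * (I * I - 1) * c0 * (1 + S0)) with (rho * (I*I-1) * (c0 * (1 + S0))) by ring.
    rewrite Hc1. nra. }
  replace (rho * A01 a01 + A01 a01 * kk * kk * c0 / qf kk phi0)
    with (A01 a01 * (rho * qf kk phi0 + kk * kk * c0) / qf kk phi0) by (field; lra).
  rewrite Eq, kk_rho.
  replace (rho * (1 - rho * c0) + rho * I * (rho * I) * c0) with (rho * (1 + rho * (I*I-1) * c0)) by ring.
  rewrite Hw. replace (1 + (S0 - 1)) with S0 by ring.
  unfold Rdiv. apply Rmult_integral_contrapositive. split.
  apply Rmult_integral_contrapositive. split; auto. apply Rmult_integral_contrapositive. split. apply rho_nz. lra.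
  apply Rinv_neq_0_compat. lra.
Qed.

Lemma deriv_thl : exists d, derivable_pt_lim (fun th => Lstar a00 a10 a01 I th) (thlf mu0 I) d /\ d <> 0.
Proof.
  eexists. split. apply Lstar_deriv.
  rewrite thl_eq, GF. unfold Hfd. rewrite cos_phi0.
  assert (Hs : 0 < sin phi0) by (apply sin_gt_0; apply phi0_bound).
  assert (Hf := Ffd_pos I kk Hk Hx' phi0).
  assert (HK := key_nz).
  apply Rmult_integral_contrapositive. split.
  apply Rmult_integral_contrapositive. split; auto. lra.
  unfold Rdiv. rewrite Rmult_1_l. apply Rinv_neq_0_compat. lra.
Qed.

Lemma deriv_thr : exists d, derivable_pt_lim (fun th => Lstar a00 a10 a01 I th) (thrf mu0 I) d /\ d <> 0.
Proof.
  eexists. split. apply Lstar_deriv.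
  unfold thrf. rewrite thl_eq, <- Ff_sym, GF. unfold Hfd.
  assert (Ec : cos (2 * PI - phi0) = c0).
  { replace (2 * PI - phi0) with (- phi0 + 2 * INR 1 * PI) by (simpl; ring). rewrite cos_period, cos_neg. apply cos_phi0. }
  assert (Es : sin (2 * PI - phi0) = - sin phi0).
  { replace (2 * PI - phi0) with (- phi0 + 2 * INR 1 * PI) by (simpl; ring). rewrite sin_period, sin_neg. auto. }
  assert (Eq : qf kk (2 * PI - phi0) = qf kk phi0).
  { unfold qf. rewrite Es. f_equal. ring. }
  rewrite Ec, Es, Eq.
  assert (Hs : 0 < sin phi0) by (apply sin_gt_0; apply phi0_bound).
  assert (Hf := Ffd_pos I kk Hk Hx' (2 * PI - phi0)).
  assert (HK := key_nz).
  apply Rmult_integral_contrapositive. split.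
  apply Rmult_integral_contrapositive. split; auto. lra.
  unfold Rdiv. rewrite Rmult_1_l. apply Rinv_neq_0_compat. lra.
Qed.

Lemma thl_bound : 0 < thlf mu0 I < PI.
Proof.
  rewrite thl_eq. assert (H := phi0_bound). split.
  - rewrite <- (Ff_0 I kk). apply (Ff_incr I kk Hk Hx'). lra.
  - rewrite <- (Ff_PI I kk). apply (Ff_incr I kk Hk Hx'). lra.
Qed.

End Main.

Definition Ugood mu I := Rabs (mu * alpha I) < 1 /\ Rabs (mu * beta I) < 1.

Section Sm.
Variables a10 a01 : R.
Hypothesis Ha : a10 * a01 <> 0.

Lemma pw_facts I : Ugood (a10/a01) I ->
  0 < 1 - kf (a10/a01) I * kf (a10/a01) I + (I * kf (a10/a01) I) * (I * kf (a10/a01) I) /\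
  -1 < c0f (a10/a01) I < 1 /\
  -1 < kf (a10/a01) I * sqrt (1 - c0f (a10/a01) I * c0f (a10/a01) I) < 1.
Proof.
  intros [H1 H2].
  assert (Hk2 := k2' a10 a01 I H1). assert (Hx2 := x2' a10 a01 I H2).
  assert (E := kk_kf a10 a01 I). unfold mu0 in E.
  rewrite E in Hk2, Hx2.
  assert (Hc := c0_bound a10 a01 I H1 H2). unfold c0, mu0 in Hc.
  split. assert (0 <= (I * kf (a10/a01) I) * (I * kf (a10/a01) I)) by nra. lra.
  split. auto.
  set (c := c0f (a10/a01) I) in *. set (k := kf (a10/a01) I) in *.
  assert (Hs0 : 0 <= 1 - c * c) by nra.
  assert (Hs : sqrt (1 - c*c) <= 1).
  { assert (Hh : sqrt (1 - c*c) <= sqrt 1) by (apply sqrt_le_1_alt; nra). rewrite sqrt_1 in Hh; auto. }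
  assert (Hsp := sqrt_pos (1 - c*c)).
  assert (Hkk : -1 < k < 1) by nra.
  split; nra.
Qed.

Lemma smooth_kf U : smooth_on U (kf (a10/a01)).
Proof.
  unfold kf. apply smooth_mult. apply smooth_const. apply smooth_mult. apply smooth_id. apply smooth_gam.
Qed.

Lemma smooth_thlf : smooth_on (Ugood (a10/a01)) (thlf (a10/a01)).
Proof.
  set (U := Ugood (a10/a01)).
  assert (SK := smooth_kf U).
  assert (SS : smooth_on U (Sf (a10/a01))).
  { unfold Sf. apply smooth_sqrt.
    apply smooth_plus. apply smooth_plus with (f := fun _ => 1). apply smooth_const.
    apply smooth_ext with (f := fun x => -1 * (kf (a10/a01) x * kf (a10/a01) x)). intros; ring.
    apply smooth_mult. apply smooth_const. apply smooth_mult; auto.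
    apply smooth_mult; apply smooth_mult; auto; apply smooth_id.
    intros x Hx. apply (pw_facts x Hx). }
  assert (SC : smooth_on U (c0f (a10/a01))).
  { unfold c0f. apply smooth_ext with (f := fun x => (x * kf (a10/a01) x) * / (1 + Sf (a10/a01) x)). reflexivity.
    apply smooth_mult. apply smooth_mult; auto. apply smooth_id.
    apply smooth_inv. apply smooth_plus; auto. apply smooth_const.
    intros x _. assert (H := sqrt_pos (1 - kf (a10/a01) x * kf (a10/a01) x + (x * kf (a10/a01) x) * (x * kf (a10/a01) x))).
    unfold Sf. lra. }
  unfold thlf. apply smooth_plus.
  - apply smooth_ext with (f := fun x => PI/2 + -1 * asin (c0f (a10/a01) x)). intros; ring.
    apply smooth_plus. apply smooth_const. apply smooth_mult. apply smooth_const.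
    apply smooth_asin; auto. intros x Hx. apply (pw_facts x Hx).
  - apply smooth_mult. apply smooth_id. apply smooth_asin.
    apply smooth_mult; auto. apply smooth_sqrt.
    apply smooth_plus with (f := fun _ => 1). apply smooth_const.
    apply smooth_ext with (f := fun x => -1 * (c0f (a10/a01) x * c0f (a10/a01) x)). intros; ring.
    apply smooth_mult. apply smooth_const. apply smooth_mult; auto.
    intros x Hx. destruct (pw_facts x Hx) as [_ [Hc _]]. nra.
    intros x Hx. apply (pw_facts x Hx).
Qed.

Lemma smooth_thrf : smooth_on (Ugood (a10/a01)) (thrf (a10/a01)).
Proof.
  unfold thrf. apply smooth_ext with (f := fun x => 2 * PI + -1 * thlf (a10/a01) x). intros; ring.
  apply smooth_plus. apply smooth_const. apply smooth_mult. apply smooth_const. apply smooth_thlf.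
Qed.
End Sm.

Lemma abs_alpha I : Rabs (alpha I) = alpha (Rabs I).
Proof.
  unfold Rabs at 2. destruct (Rcase_abs I) as [H|H].
  - rewrite <- (Ropp_involutive I) at 1. rewrite alpha_odd, Rabs_Ropp.
    apply Rabs_right. apply Rle_ge, alpha_nonneg. lra.
  - apply Rabs_right. apply Rle_ge, alpha_nonneg. lra.
Qed.

Lemma abs_beta I : Rabs (beta I) = beta (Rabs I).
Proof.
  assert (Hb : forall J, 0 <= J -> 0 <= beta J).
  { intros J HJ. unfold beta. assert (0 <= alpha J) by (apply alpha_nonneg; auto). nra. }
  unfold Rabs at 2. destruct (Rcase_abs I) as [H|H].
  - rewrite <- beta_even. apply Rabs_right. apply Rle_ge, Hb. lra.
  - apply Rabs_right. apply Rle_ge, Hb. lra.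
Qed.

Theorem mainTheorem5 :
  forall a00 a10 a01 : R,
    a10 * a01 <> 0 ->
    let mu := a10 / a01 in
    forall bmax : R,
      is_max_of (fun b => exists I, 0 <= I /\ b = beta I) bmax ->
    forall Ip Ipp : R,
      (1 / bmax <= Rabs mu ->
         is_max_of (fun I => 0 < I /\
                     I ^ 3 * sinh (PI / 2) / sinh (I * PI / 2) = 1 / Rabs mu) Ipp /\
         (Rabs mu <= 1 ->
            is_min_of (fun I => 0 < I /\
                        I ^ 3 * sinh (PI / 2) / sinh (I * PI / 2) = 1 / Rabs mu) Ip) /\
         (1 <= Rabs mu ->
            is_min_of (fun I => 0 < I /\
                        I ^ 2 * sinh (PI / 2) / sinh (I * PI / 2) = 1 / Rabs mu) Ip)) ->
    let B := Bdom mu bmax Ip Ipp in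
    exists thl thr : R -> R,
      smooth_on B thl /\ smooth_on B thr /\
      (forall I, B I -> 0 < thl I < PI /\ PI < thr I < 2 * PI) /\
      (forall I theta, B I -> 0 <= theta < 2 * PI ->
         (Lstar a00 a10 a01 I theta = A00 a00 + A01 a01 <->
          theta = thl I \/ theta = thr I)) /\
      (forall I, B I ->
         (exists d, derivable_pt_lim (fun th => Lstar a00 a10 a01 I th) (thl I) d /\ d <> 0) /\
         (exists d, derivable_pt_lim (fun th => Lstar a00 a10 a01 I th) (thr I) d /\ d <> 0)).
Proof.
  intros a00 a10 a01 Ha mu bmax Hbmax Ip Ipp Hroots B.
  assert (Hm : 0 < Rabs mu).
  { apply Rabs_pos_lt. unfold mu. intro E.
    assert (a01 <> 0) by (intro; apply Ha; subst; ring).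
    assert (a10 = 0). { apply Rmult_eq_reg_r with (/ a01). unfold Rdiv in E. lra. apply Rinv_neq_0_compat; auto. }
    apply Ha. rewrite H0. ring. }
  assert (Hdom : forall I, B I -> Ugood mu I).
  { intros I HB. unfold B, Bdom in HB.
    assert (Hc : (Rabs mu < 1 / bmax) \/ (Rabs I < - Ipp \/ (- Ip < Rabs I /\ Rabs I < Ip) \/ Ipp < Rabs I)).
    { destruct (Rlt_dec (Rabs mu) (1 / bmax)) as [H|H]; [left; auto|right].
      unfold Rabs at 1 2 3 4. destruct (Rcase_abs I); lra. }
    destruct (dom_pos (Rabs mu) bmax Ip Ipp Hm Hbmax Hroots (Rabs I) (Rabs_pos I) Hc) as [H1 H2].
    unfold Ugood. rewrite !Rabs_mult, abs_alpha, abs_beta. auto. }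
  exists (thlf mu), (thrf mu).
  split. { apply smooth_sub with (V := Ugood mu); auto. apply smooth_thlf; auto. }
  split. { apply smooth_sub with (V := Ugood mu); auto. apply smooth_thrf; auto. }
  split.
  { intros I HB. destruct (Hdom I HB) as [H1 H2].
    assert (H := thl_bound a10 a01 I H1 H2). unfold mu0 in H. fold mu in H.
    unfold thrf. lra. }
  split.
  { intros I th HB Hth. destruct (Hdom I HB) as [H1 H2].
    apply (level_set a00 a10 a01 I Ha H1 H2 th Hth). }
  intros I HB. destruct (Hdom I HB) as [H1 H2]. split.
  - apply (deriv_thl a00 a10 a01 I Ha H1 H2).
  - apply (deriv_thr a00 a10 a01 I Ha H1 H2).
Qed.
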